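(* Let $F:\mathcal{W}\to\mathbb{R}$ be smooth. Let $\tilde x_t\in\mathcal{W}$, set $x^j_{t,0}=\tilde x_t$ and define $x^j_{t,k}=\mathrm{R}_{x^j_{t,k-1}}\big(-\alpha_{t,k-1}\mathcal{G}_F(x^j_{t,k-1})\big)$ for $k\ge1$, where $\alpha_{t,k-1}>0$ and $\mathcal{G}_F(x^j_{t,k-1})\in\mathrm{T}_{x^j_{t,k-1}}\mathcal{M}$ is an estimator of $\mathrm{grad}F(x^j_{t,k-1})$; assume all these points lie in $\mathcal{W}$. Then for every $k\ge1$, \[ \|\mathrm{R}_{\tilde x_t}^{-1}(x^j_{t,k})\|^2\le 2k\sum_{\tau=0}^{k-1}\alpha_{t,\tau}^2\big(C_2^2+\alpha_{t,\tau}^2C_3^2\|\mathcal{G}_F(x^j_{t,\tau})\|^2\big)\|\mathcal{G}_F(x^j_{t,\tau})\|^2 . \]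
   Context: $\mathcal{M}$ is a Riemannian manifold with norm $\|\cdot\|$ on tangent spaces; $0_x$ is the zero of $\mathrm{T}_x\mathcal{M}$. $\mathrm{R}$ is a smooth retraction ($\mathrm{R}_x(0_x)=x$, $\mathrm{D}\mathrm{R}_x(0_x)=\mathrm{id}$). $\mathcal{W}\subseteq\mathcal{M}$ is a compact connected set that is totally retractive: there is $r>0$ such that for every $y\in\mathcal{W}$, $\mathcal{W}\subseteq\mathrm{R}_y(\mathbb{B}(0_y,r))$ and $\mathrm{R}_y$ is a diffeomorphism on $\mathbb{B}(0_y,r)$; so $\mathrm{R}_x^{-1}(y)$ is defined for $x,y\in\mathcal{W}$. For $x,y\in\mathcal{W}$ let $P_{x,y}=\mathrm{R}_y^{-1}\circ\mathrm{R}_x$ (a map from $\mathrm{R}_x^{-1}(\mathcal{W})\subseteq\mathrm{T}_x\mathcal{M}$ to $\mathrm{T}_y\mathcal{M}$). $C_2,C_3>0$ are constants (depending only on $\mathcal{M}$, $\mathrm{R}$, $\mathcal{W}$, obtained as uniform bounds on the first and second derivatives of $P_{x,y}$ on this compact domain) such that for all $x,y\in\mathcal{W}$ and all $\eta\in\mathrm{T}_x\mathcal{M}$ with $\mathrm{R}_x(\eta)\in\mathcal{W}$: $\|\mathrm{D}P_{x,y}(0_x)\|_{\mathrm{op}}\le C_2$ and $\|P_{x,y}(\eta)-P_{x,y}(0_x)-\mathrm{D}P_{x,y}(0_x)[\eta]\|\le C_3\|\eta\|^2$. *)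

(* Defs.v *)
From HB Require Import structures.
From mathcomp Require Import all_boot all_order all_algebra.
From mathcomp Require Import all_classical all_reals all_analysis.
Set Implicit Arguments. Unset Strict Implicit. Unset Printing Implicit Defensive.
Import Order.TTheory GRing.Theory Num.Theory.
Import numFieldNormedType.Exports.
Local Open Scope ring_scope.
Local Open Scope classical_set_scope.

Definition Pmap (R : realType) (M : Type) (T : M -> normedModType R)
  (Rt : forall x : M, T x -> M) (Rinv : forall y : M, M -> T y)
  (x y : M) : T x -> T y := fun v => Rinv y (Rt x v).
Arguments Pmap {R M T} Rt Rinv x y.

(* The iterates x_{t,0} = x0, x_{t,k} = R_{x_{t,k-1}}(-alpha_{k-1} G_{k-1}(x_{t,k-1})).
   G k z is the gradient estimator used at step k, evaluated at the point z. *)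
Fixpoint iterates (R : realType) (M : Type) (T : M -> normedModType R)
  (Rt : forall x : M, T x -> M) (alpha : nat -> R) (G : nat -> forall z : M, T z)
  (x0 : M) (k : nat) : M :=
  match k with
  | 0 => x0
  | k'.+1 => let z := iterates Rt alpha G x0 k' in Rt z (- (alpha k' *: G k' z))
  end.

Definition DPmap (R : realType) (M : Type) (T : M -> normedModType R)
  (Rt : forall x : M, T x -> M) (Rinv : forall y : M, M -> T y)
  (x y : M) : T x -> T y := let f := Pmap Rt Rinv x y in 'd f 0.
Arguments DPmap {R M T} Rt Rinv x y.

(* Main.v *)
Require Import Defs.
From HB Require Import structures.
From mathcomp Require Import all_boot all_order all_algebra.
From mathcomp Require Import all_classical all_reals all_analysis.
From mathcomp Require Import ring lra.
Import Order.TTheory GRing.Theory Num.Theory.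
Import numFieldNormedType.Exports.
Local Open Scope ring_scope.
Local Open Scope classical_set_scope.

Lemma cs_sum (R : realFieldType) (a : nat -> R) (k : nat) :
  (\sum_(i < k) a i) ^+ 2 <= k%:R * \sum_(i < k) a i ^+ 2.
Proof.
elim: k => [|k IH]; first by rewrite !big_ord0 expr0n /= mul0r.
case: (posnP k) => [->|kp].
  rewrite !big_ord_recr !big_ord0 /= !add0r mul1r; exact: lexx.
rewrite !big_ord_recr /=.
set S := \sum_(i < k) a i in IH *.
set Q := \sum_(i < k) a i ^+ 2 in IH *.
have Q0 : 0 <= Q by apply: sumr_ge0 => i _; exact: sqr_ge0.
rewrite -natr1.
have kp' : 0 < (k%:R : R) by rewrite ltr0n.
have hs := sqr_ge0 (S - k%:R * a k).
have h1 : 0 <= k%:R * (Q + k%:R * a k ^+ 2 - 2 * S * a k) by nra.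
have h2 : 0 <= Q + k%:R * a k ^+ 2 - 2 * S * a k.
  by rewrite -(pmulr_rge0 _ kp').
nra.
Qed.

Theorem lemma3 (R : realType) (M : Type) (T : M -> normedModType R)
  (Rt : forall x : M, T x -> M) (Rinv : forall y : M, M -> T y)
  (W : set M) (r C2 C3 : R)
  (* retraction: R_x(0_x) = x *)
  (hR0 : forall x : M, Rt x 0 = x)
  (* W totally retractive with radius r, Rinv the inverse of R_y on the ball *)
  (hr : 0 < r)
  (hWcov : forall y z : M, W y -> W z -> `|Rinv y z| < r /\ Rt y (Rinv y z) = z)
  (hRinvK : forall (y : M) (v : T y), W y -> `|v| < r -> Rinv y (Rt y v) = v)
  (hC2 : 0 < C2) (hC3 : 0 < C3)
  (hD : forall x y : M, W x -> W y -> forall v : T x,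
      `|DPmap Rt Rinv x y v| <= C2 * `|v|)
  (hRem : forall x y : M, W x -> W y -> forall eta : T x, W (Rt x eta) ->
      `|Pmap Rt Rinv x y eta - Pmap Rt Rinv x y 0 - DPmap Rt Rinv x y eta|
        <= C3 * `|eta| ^+ 2)
  (xt : M) (alpha : nat -> R) (G : nat -> forall z : M, T z)
  (halpha : forall k, 0 < alpha k)
  (hin : forall k, W (iterates Rt alpha G xt k))
  (k : nat) (hk : (1 <= k)%N) :
  `|Rinv xt (iterates Rt alpha G xt k)| ^+ 2 <=
    2 * k%:R * \sum_(tau < k)
      (alpha tau ^+ 2 *
        (C2 ^+ 2 + alpha tau ^+ 2 * C3 ^+ 2 * `|G tau (iterates Rt alpha G xt tau)| ^+ 2)
       * `|G tau (iterates Rt alpha G xt tau)| ^+ 2).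
Proof.
set z := iterates Rt alpha G xt.
set v := fun n => Rinv xt (z n).
set g := fun n => `|G n (z n)|.
set a := fun n => `|v n.+1 - v n|.
have xtW : W xt by exact: (hin 0%N).
have step : forall n, a n <= C2 * (alpha n * g n) + C3 * (alpha n * g n) ^+ 2.
  move=> n; rewrite /a /v.
  have e1 : z n.+1 = Rt (z n) (- (alpha n *: G n (z n))) by [].
  set eta := - (alpha n *: G n (z n)) in e1.
  have e2 : Rinv xt (z n.+1) = Pmap Rt Rinv (z n) xt eta by rewrite e1.
  have e3 : Rinv xt (z n) = Pmap Rt Rinv (z n) xt 0 by rewrite /Pmap hR0.
  have neta : `|eta| = alpha n * g n.
    by rewrite /eta normrN normrZ ger0_norm // ltW.
  rewrite e2 e3.
  have -> : Pmap Rt Rinv (z n) xt eta - Pmap Rt Rinv (z n) xt 0 =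
    (Pmap Rt Rinv (z n) xt eta - Pmap Rt Rinv (z n) xt 0
       - DPmap Rt Rinv (z n) xt eta) + DPmap Rt Rinv (z n) xt eta.
    by rewrite subrK.
  apply: (le_trans (ler_normD _ _)).
  rewrite addrC -neta; apply: lerD.
    exact: hD.
  by apply: hRem => //; rewrite -e1; exact: hin.
have v0 : v 0%N = 0.
  have h := hRinvK xt 0 xtW; rewrite normr0 hR0 in h.
  exact: h hr.
have tri : forall n, `|v n| <= \sum_(i < n) a i.
  elim=> [|n IH]; first by rewrite v0 normr0 big_ord0.
  rewrite big_ord_recr /=.
  have -> : v n.+1 = (v n.+1 - v n) + v n by rewrite subrK.
  apply: (le_trans (ler_normD _ _)); rewrite addrC; apply: lerD => //.
have a2 : forall n, a n ^+ 2 <= 2 * (alpha n ^+ 2 *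
        (C2 ^+ 2 + alpha n ^+ 2 * C3 ^+ 2 * g n ^+ 2) * g n ^+ 2).
  move=> n; have := step n.
  have a0 : 0 <= a n by exact: normr_ge0.
  have g0 : 0 <= g n by exact: normr_ge0.
  have al0 := halpha n.
  set x := alpha n * g n.
  have x0 : 0 <= x by rewrite /x mulr_ge0 // ltW.
  move=> h.
  have h1 : a n ^+ 2 <= (C2 * x + C3 * x ^+ 2) ^+ 2.
    by rewrite ler_sqr ?nnegrE //; have := sqr_ge0 x; nra.
  apply: (le_trans h1).
  have -> : 2 * (alpha n ^+ 2 * (C2 ^+ 2 + alpha n ^+ 2 * C3 ^+ 2 * g n ^+ 2) * g n ^+ 2)
     = 2 * ((C2 * x) ^+ 2 + (C3 * x ^+ 2) ^+ 2) by rewrite /x; ring.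
  set p := C2 * x; set q := C3 * x ^+ 2.
  have := sqr_ge0 (p - q); nra.
have S0 : 0 <= \sum_(i < k) a i by apply: sumr_ge0 => i _; exact: normr_ge0.
apply: (le_trans (y := (\sum_(i < k) a i) ^+ 2)).
  by rewrite ler_sqr ?nnegrE //; exact: tri.
apply: le_trans; first exact: (cs_sum _ a k).
rewrite -mulrA [2 * _]mulrC -mulrA ler_wpM2l //.
rewrite mulr_suml; apply: ler_sum => i _. have := a2 i; rewrite /g [2 * _]mulrC. exact.
Qed.
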